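(* In the planted $k$-factor model, for every $\ell\in\{0,1,\dots,kn/2\}$ let $Z_\ell(H^*,G)$ be the number of $H\in\mathcal H$ with $|H\cap H^*|=\ell$ and $H\subseteq E(G)$. Then $$\mathbb E[Z_\ell(H^*,G)]\le (nkp)^{kn/2-\ell}.$$
   Context: Planted $k$-factor model: fix an integer $k\ge1$ and $n$ with $kn$ even. A $k$-factor on $[n]$ is a $k$-regular simple graph with vertex set $[n]$, identified with its edge set; $\mathcal H$ is the set of all $k$-factors on $[n]$. Let $p\in[0,1]$. Draw $H^*$ uniformly at random from $\mathcal H$ and, independently, $G_0\sim\mathcal G(n,p)$ (each of the $\binom n2$ vertex pairs is an edge independently with probability $p$). The observed graph is $G=G_0\cup H^*$. *)

(* Defs.v *)
From mathcomp Require Import all_boot all_order all_algebra.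
Set Implicit Arguments. Unset Strict Implicit. Unset Printing Implicit Defensive.
Import Order.TTheory GRing.Theory Num.Theory.
Local Open Scope ring_scope.

(* Vertex set [n] = 'I_n.  An (unordered) vertex pair / potential edge is a
   2-element subset of 'I_n.  A simple graph on [n] is identified with its
   edge set, a set of vertex pairs. *)
Definition pairs (n : nat) : {set {set 'I_n}} := [set e : {set 'I_n} | #|e| == 2%N].

Definition is_kfactor (n k : nat) (H : {set {set 'I_n}}) : bool :=
  (H \subset pairs n) && [forall v : 'I_n, #|[set e in H | v \in e]| == k].

Definition kfactors (n k : nat) : {set {set {set 'I_n}}} :=
  [set H | is_kfactor k H].

Definition gnp_weight (R : ringType) (n : nat) (p : R) (G0 : {set {set 'I_n}}) : R :=
  p ^+ #|G0| * (1 - p) ^+ (#|pairs n| - #|G0|).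

Definition Zl (n k l : nat) (Hs G : {set {set 'I_n}}) : nat :=
  #|[set H in kfactors n k | (#|H :&: Hs| == l) && (H \subset G)]|.

(* E[Z_l(H*, G)] with H* uniform on \mathcal H, G0 ~ G(n,p) independent,
   G = G0 \cup H*. *)
Definition expected_Zl (R : fieldType) (n k l : nat) (p : R) : R :=
  \sum_(Hs in kfactors n k) \sum_(G0 in powerset (pairs n))
     (#|kfactors n k|%:R)^-1 * gnp_weight p G0 * (Zl k l Hs (G0 :|: Hs))%:R.

(* Main.v *)
Require Import Defs.
From mathcomp Require Import all_boot all_order all_algebra.
Import Order.TTheory GRing.Theory Num.Theory.
From mathcomp Require Import zify.
Set Implicit Arguments. Unset Strict Implicit. Unset Printing Implicit Defensive.
Definition deg n (N : {set {set 'I_n}}) (v : 'I_n) : nat := #|[set e in N | v \in e]|.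
Lemma sum_mem n (e : {set 'I_n}) : \sum_(v < n) (v \in e) = #|e|.
Proof. by rewrite -sum1_card [RHS]big_mkcond /=; apply: eq_bigr => v _; case: (v \in e). Qed.

Lemma cardsum (T : finType) (A : {set T}) (P : pred T) :
  #|[set x in A | P x]| = \sum_(x in A) P x.
Proof.
rewrite -sum1_card big_mkcond [RHS]big_mkcond /=; apply: eq_bigr => x _.
by rewrite inE; case: (x \in A); case: (P x).
Qed.

Lemma deg_sum n (N : {set {set 'I_n}}) : N \subset pairs n -> \sum_v deg N v = 2 * #|N|.
Proof.
move=> sNP; rewrite /deg.
under eq_bigr => v _ do rewrite cardsum.
rewrite exchange_big /=.
rewrite (eq_bigr (fun _ => 2)); first by rewrite sum_nat_const mulnC.
move=> e eN; rewrite sum_mem.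
by have := subsetP sNP e eN; rewrite inE => /eqP.
Qed.

Lemma ffact_le_exp K m : K ^_ m <= K ^ m.
Proof.
rewrite ffact_prod; have ->: K ^ m = \prod_(i < m) K by rewrite prod_nat_const card_ord.
by apply: leq_prod => i _; rewrite leq_subr.
Qed.

Definition Tset n (d : 'I_n -> nat) : {set {set {set 'I_n}}} :=
  [set N : {set {set 'I_n}} | (N \subset pairs n) && [forall v, deg N v == d v]].

Lemma le_sum n (d : 'I_n -> nat) a : d a <= \sum_v d v.
Proof. by rewrite (bigD1 a) //= leq_addr. Qed.

Lemma deg_D1 n (N : {set {set 'I_n}}) e v : e \in N ->
  deg N v = (v \in e) + deg (N :\ e) v.
Proof.
move=> eN; rewrite /deg (cardsD1 e) inE eN /=.
suff -> : [set e0 in N | v \in e0] :\ e = [set e0 in N :\ e | v \in e0] by [].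
by apply/setP => f; rewrite !inE andbA.
Qed.

Lemma pair2 n (e : {set 'I_n}) a c : e \in pairs n -> a \in e -> c \in e -> c != a ->
  e = [set a; c].
Proof.
rewrite inE => /eqP e2 ae ce ca; apply/esym/eqP; rewrite eqEcard e2 cards2 eq_sym ca andbT.
by apply/subsetP => x; rewrite !inE => /orP[]/eqP->.
Qed.

Lemma Tset_bound n m : forall d : 'I_n -> nat, \sum_v d v = 2 * m -> #|Tset d| <= 2 ^ m * m`!.
Proof.
elim: m => [|m IH] d Hd.
  rewrite muln1 expn0 -(cards1 (@set0 {set 'I_n})); apply: subset_leq_card; apply/subsetP => N.
  rewrite !inE => /andP[sNP /forallP Hdeg]; apply/eqP/setP => e; rewrite inE.
  apply/negP => eN.
  have := subsetP sNP e eN; rewrite inE => /eqP e2.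
  have /card_gt0P [v ve] : 0 < #|e| by rewrite e2.
  have := Hdeg v; rewrite (deg_D1 v eN) ve => /eqP Hv.
  by have := le_sum d v; rewrite Hd muln0 -Hv.
have [a Ha] : exists a, 0 < d a.
  case: (pickP [pred a | 0 < d a]) => [a Ha|H0]; first by exists a.
  move: Hd; rewrite big1 // => v _; have := H0 v; rewrite /= lt0n => /negbFE/eqP.
  by [].
pose g (N : {set {set 'I_n}}) := odflt set0 [pick e in N | a \in e].
have gP N : N \in Tset d -> g N \in N /\ a \in g N.
  rewrite inE => /andP[_ /forallP Hdeg].
  rewrite /g; case: pickP => [e /= /andP[eN ae] //|H0].
  have := Hdeg a; rewrite /deg => /eqP; move: Ha => /[swap] <-.
  case/card_gt0P => e; rewrite inE => /andP[eN ae].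
  by have := H0 e; rewrite /= eN ae.
pose E := [set e in pairs n | (a \in e) && [forall v, (v \in e) ==> (0 < d v)]].
have gE N : N \in Tset d -> g N \in E.
  move=> NT; have [gN ag] := gP N NT; move: NT; rewrite inE => /andP[sNP /forallP Hdeg].
  rewrite inE (subsetP sNP _ gN) ag /=; apply/forallP => v; apply/implyP => vg.
  by have := Hdeg v; rewrite (deg_D1 v gN) vg => /eqP <-.
have step e : e \in E -> #|[set N in Tset d | g N == e]| <= 2 ^ m * m`!.
  rewrite inE => /and3P[eP ae /forallP He].
  pose d' v := d v - (v \in e).
  have Hd' : \sum_v d' v = 2 * m.
    rewrite /d' sumnB; last by move=> v _; have := He v; case: (v \in e).
    by rewrite Hd sum_mem; have := eP; rewrite inE => /eqP ->; lia.
  apply: leq_trans (IH d' Hd').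
  rewrite -(card_in_imset (f := fun N => N :\ e)).
    apply: subset_leq_card; apply/subsetP => _ /imsetP[N + ->].
    rewrite !inE => /andP[/andP[sNP /forallP Hdeg] /eqP gNe].
    have NT : N \in Tset d by rewrite inE sNP; apply/forallP.
    have [eN _] := gP N NT; rewrite gNe in eN.
    rewrite (subset_trans (subD1set _ _) sNP) /=; apply/forallP => v.
    by have := Hdeg v; rewrite (deg_D1 v eN) /d' => /eqP <-; rewrite addKn.
  move=> N1 N2; rewrite [N1 \in _]inE [N2 \in _]inE => /andP[NT1 /eqP g1] /andP[NT2 /eqP g2] Heq.
  have [e1 _] := gP N1 NT1; have [e2 _] := gP N2 NT2; rewrite g1 in e1; rewrite g2 in e2.
  by rewrite -(setD1K e1) -(setD1K e2) Heq.
have cardE : #|E| <= 2 * m.+1.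
  pose c (e : {set 'I_n}) := odflt a [pick v in e | v != a].
  have cP e : e \in E -> c e \in e /\ c e != a /\ 0 < d (c e).
    rewrite inE => /and3P[eP ae /forallP He].
    have [x xe xa] : exists2 x, x \in e & x != a.
      have : #|e :\ a| = 1 by move: eP; rewrite inE (cardsD1 a) ae => /eqP; rewrite add1n => -[].
      move=> /eqP /cards1P [x ex]; have : x \in e :\ a by rewrite ex set11.
      by rewrite !inE => /andP[xa xe]; exists x.
    rewrite /c; case: pickP => [v /andP[ve va] /=|H0]; last by have := H0 x; rewrite /= xe xa.
    by split=> //; split=> //; have := He v; rewrite ve.
  apply: leq_trans (_ : #|[set v | 0 < d v]| <= _).
    rewrite -(card_in_imset (f := c)).
      apply: subset_leq_card; apply/subsetP => _ /imsetP[e eE ->].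
      by rewrite inE; case: (cP e eE) => _ [].
    move=> e1 e2 E1 E2 ce.
    have [c1 [ca1 _]] := cP e1 E1; have [c2 [ca2 _]] := cP e2 E2.
    move: E1 E2; rewrite [e1 \in E]inE [e2 \in E]inE => /and3P[P1 a1 _] /and3P[P2 a2 _].
    by rewrite (pair2 P1 a1 c1 ca1) (pair2 P2 a2 c2 ca2) ce.
  rewrite -Hd -sum1_card [X in X <= _]big_mkcond /=; apply: leq_sum => v _.
  by rewrite inE; case: (d v).
rewrite -sum1_card (partition_big g (mem E)) /=; last by move=> N NT; apply: gE.
apply: leq_trans (_ : \sum_(e in E) 2 ^ m * m`! <= _).
  apply: leq_sum => e eE; apply: leq_trans (step e eE).
  by rewrite -sum1_card; apply: eq_leq; apply: eq_bigl => N; rewrite inE.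
rewrite sum_nat_const factS expnS.
have := cardE; set x := #|E|; set y := 2 ^ m; set z := m`!; nia.
Qed.

Lemma deg_split n (A B : {set {set 'I_n}}) v : deg A v = deg (A :&: B) v + deg (A :\: B) v.
Proof.
rewrite /deg -(cardsID B [set e in A | v \in e]).
have -> : [set e in A | v \in e] :&: B = [set e in A :&: B | v \in e].
  by apply/setP => f; rewrite !inE; case: (f \in A); case: (f \in B); case: (v \in f).
have -> : [set e in A | v \in e] :\: B = [set e in A :\: B | v \in e].
  by apply/setP => f; rewrite !inE; case: (f \in A); case: (f \in B); case: (v \in f).
by [].
Qed.

Lemma kf_deg n k H v : H \in kfactors n k -> deg H v = k.
Proof. rewrite inE /is_kfactor => /andP[_ /forallP /(_ v) /eqP Hv]; rewrite /deg; exact: Hv. Qed.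

Lemma kf_sub n k H : H \in kfactors n k -> H \subset pairs n.
Proof. by rewrite inE => /andP[]. Qed.

Lemma kf_card n k H : H \in kfactors n k -> 2 * #|H| = k * n.
Proof.
move=> HK; rewrite -deg_sum; last exact: kf_sub HK.
rewrite (eq_bigr (fun _ => k)); last by move=> v _; exact: kf_deg HK.
by rewrite sum_nat_const card_ord mulnC.
Qed.

Lemma Aset_bound n k l Hs : Hs \in kfactors n k ->
  #|[set H in kfactors n k | #|H :&: Hs| == l]| <= (k * n) ^ (#|Hs| - l).
Proof.
move=> HsK; set A := [set H in _ | _]; set m := #|Hs| - l.
pose Rset := [set R : {set {set 'I_n}} | R \subset Hs & #|R| == m].
pose h (H : {set {set 'I_n}}) := Hs :\: H.
have hR H : H \in A -> h H \in Rset.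
  rewrite [H \in A]inE => /andP[_ /eqP Hl]; rewrite inE subsetDl /= /h cardsD setIC Hl.
  by [].
have step R : R \in Rset -> #|[set H in A | h H == R]| <= 2 ^ m * m`!.
  rewrite inE => /andP[RHs /eqP Rm].
  have Rd : \sum_v deg R v = 2 * m.
    by rewrite deg_sum ?Rm // (subset_trans RHs (kf_sub HsK)).
  apply: leq_trans (Tset_bound Rd).
  rewrite -(card_in_imset (f := fun H => H :\: Hs)).
    apply: subset_leq_card; apply/subsetP => _ /imsetP[H + ->].
    rewrite [H \in _]inE [H \in A]inE => /andP[/andP[HK _] /eqP hH]; rewrite inE.
    rewrite (subset_trans (subsetDl _ _) (kf_sub HK)) /=; apply/forallP => v.
    rewrite -hH /h; apply/eqP.
    have := deg_split H Hs v; have := deg_split Hs H v.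
    rewrite (kf_deg v HK) (kf_deg v HsK) setIC => E; lia.
  move=> H1 H2; rewrite [H1 \in _]inE [H2 \in _]inE => /andP[_ /eqP h1] /andP[_ /eqP h2] Heq.
  have E : Hs :\: H1 = Hs :\: H2 by rewrite -/(h H1) h1 -h2.
  rewrite -(setID H1 Hs) -(setID H2 Hs) Heq.
  have -> : H1 :&: Hs = H2 :&: Hs; last by [].
  apply/setP => x; have := congr1 (fun S : {set {set 'I_n}} => x \in S) E; rewrite !inE /=.
  by case: (x \in Hs); case: (x \in H1); case: (x \in H2).
rewrite -sum1_card (partition_big h (mem Rset)) /=; last by move=> H HA; apply: hR.
apply: leq_trans (_ : \sum_(R in Rset) 2 ^ m * m`! <= _).
  apply: leq_sum => R RR; apply: leq_trans (step R RR).
  by rewrite -sum1_card; apply: eq_leq; apply: eq_bigl => H; rewrite inE.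
rewrite sum_nat_const cards_draws mulnCA bin_ffact -(kf_card HsK) expnMn.
by rewrite leq_mul2l ffact_le_exp orbT.
Qed.

Local Open Scope ring_scope.

Lemma gnp_sum (R : comRingType) n (p : R) (A : {set {set 'I_n}}) : A \subset pairs n ->
  \sum_(G0 in powerset (pairs n)) gnp_weight p G0 * (A \subset G0)%:R = p ^+ #|A|.
Proof.
move=> sAP.
pose F (e : {set 'I_n}) := if e \in pairs n then p else 0.
pose G (e : {set 'I_n}) := if e \in pairs n then (if e \in A then 0 else 1 - p) else 1.
have L : \prod_e (F e + G e) = p ^+ #|A|.
  rewrite -prodr_const [RHS]big_mkcond /=; apply: eq_bigr => e _.
  rewrite /F /G; have [eA|eA] := boolP (e \in A).
    by rewrite (subsetP sAP e eA) addr0.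
  case: (e \in pairs n); last by rewrite add0r.
  by rewrite addrC subrK.
rewrite big_mkcond /= -L bigA_distr; apply: eq_big => // J _.
rewrite powersetE.
have [sJP|nJP] := boolP (J \subset pairs n).
  rewrite (bigID (mem J)) /=.
  have -> : \prod_(e | e \in J) (if e \in J then F e else G e) = p ^+ #|J|.
    rewrite -prodr_const; apply: eq_bigr => e eJ; by rewrite eJ /F (subsetP sJP e eJ).
  rewrite (bigID (mem (pairs n))) /=.
  have -> : \prod_(e | (e \notin J) && (e \notin pairs n)) (if e \in J then F e else G e) = 1.
    by apply: big1 => e /andP[/negbTE -> /negbTE eP]; rewrite /G eP.
  rewrite mulr1 /gnp_weight.
  have [sAJ|nAJ] := boolP (A \subset J).
    rewrite mulr1; congr (_ * _).
    rewrite (eq_bigl (mem (pairs n :\: J))); last by move=> e; rewrite !inE andbC.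
    have -> : (#|pairs n| - #|J|)%N = #|pairs n :\: J| by rewrite cardsD (setIidPr sJP).
    rewrite -prodr_const; apply: eq_bigr => e; rewrite in_setD => /andP[/negbTE eJ eP].
    rewrite eJ /G eP; case: ifP => // eA; by rewrite (subsetP sAJ e eA) in eJ.
  rewrite mulr0.
  have [e0 e0A e0J] : exists2 e, e \in A & e \notin J.
    by move/subsetPn: nAJ => [e eA eJ]; exists e.
  have e0P := subsetP sAP e0 e0A.
  rewrite (bigD1 e0) /=; last by rewrite e0J e0P.
  by rewrite (negbTE e0J) /G e0P e0A mul0r mulr0.
have [e0 e0J e0P] : exists2 e, e \in J & e \notin pairs n.
  by move/subsetPn: nJP => [e eA eJ]; exists e.
by rewrite (bigD1 e0) //= e0J /F (negbTE e0P) mul0r.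
Qed.

Unset Implicit Arguments.

Theorem mainTheorem12 (R : realFieldType) (n k l : nat) (p : R) :
  (1 <= k)%N -> ~~ odd (k * n) -> 0 <= p -> p <= 1 ->
  (l <= (k * n)./2)%N ->
  expected_Zl n k l p <= (n%:R * k%:R * p) ^+ ((k * n)./2 - l).
Proof.
move=> _ _ p0 _ _; rewrite /expected_Zl.
set c := #|kfactors n k|; set X := (n%:R * k%:R * p) ^+ _.
have X0 : 0 <= X by rewrite exprn_ge0 // !mulr_ge0 ?ler0n.
have inner Hs : Hs \in kfactors n k ->
    \sum_(G0 in powerset (pairs n)) (c%:R)^-1 * gnp_weight p G0 * (Zl k l Hs (G0 :|: Hs))%:R
    <= (c%:R)^-1 * X.
  move=> HsK; set A := [set H in kfactors n k | #|H :&: Hs| == l].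
  have HZ G0 : Zl k l Hs (G0 :|: Hs) = (\sum_(H in A) (H \subset G0 :|: Hs))%N.
    rewrite /Zl -cardsum; apply: eq_card => H; rewrite !inE andbA.
    by [].
  have K2 : (k * n)./2 = #|Hs| by rewrite -(kf_card HsK) mul2n doubleK.
  under eq_bigr => G0 _ do rewrite HZ natr_sum mulr_sumr.
  rewrite exchange_big /=.
  have -> : \sum_(H in A) \sum_(G0 in powerset (pairs n))
       (c%:R)^-1 * gnp_weight p G0 * (H \subset G0 :|: Hs)%:R
     = \sum_(H in A) (c%:R)^-1 * p ^+ ((k * n)./2 - l).
    apply: eq_bigr => H; rewrite inE => /andP[HK /eqP Hl].
    under eq_bigr => G0 _ do rewrite -mulrA setUC -subDset.
    rewrite -mulr_sumr gnp_sum; last exact: subset_trans (subsetDl _ _) (kf_sub HK).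
    rewrite cardsD Hl K2; congr (_ * _ ^+ (_ - _)%N).
    by apply/eqP; rewrite -(eqn_pmul2l (isT : (0 < 2)%N)) (kf_card HK) (kf_card HsK).
  rewrite sumr_const -mulrnAr; apply: ler_wpM2l; first by rewrite invr_ge0 ler0n.
  rewrite -mulr_natl /X exprMn -natrM -natrX; apply: ler_wpM2r; first exact: exprn_ge0.
  rewrite ler_nat mulnC K2. have H := Aset_bound l HsK. exact H.
apply: le_trans (_ : \sum_(Hs in kfactors n k) (c%:R)^-1 * X <= _).
  by apply: ler_sum => Hs HsK; apply: inner.
rewrite sumr_const -/c -(mulr_natl (c%:R^-1 * X) c) mulrA.
have [c0|c0] := eqVneq c 0%N; first by rewrite c0 !mul0r.
by rewrite mulfV ?pnatr_eq0 // mul1r.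
Qed.
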